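(* Let $n\in\mathbb{N}$, $n\ge1$. Let $H_n=\{0,1\}^n$ with the $\ell_1$ metric $d$, enumerated as $H_n=\{b_{n,i}:i=0,1,\ldots,2^n-1\}$ where $b_{n,i}$ is the $n$-digit binary representation of $i$ (most significant digit first). Let $D_n=[d(b_{n,i},b_{n,j})]_{0\le i,j\le 2^n-1}$ and let $O_n$ be the $2^n\times 2^n$ all-ones matrix. For $0\le j\le i$, let $\mathbb{1}_{i,j}\in\mathbb{R}^{2^i}$ be the vector whose first $2^j$ coordinates equal $1$, the next $2^j$ coordinates equal $-1$, the next $2^j$ equal $1$, and so on alternately. Let $A_n$ be the $(n+1)\times 2^n$ matrix with rows $\mathbb{1}_{n,n}^T,\mathbb{1}_{n,n-1}^T,\ldots,\mathbb{1}_{n,0}^T$. Then: (1) $D_1=\begin{bmatrix}0&1\\1&0\end{bmatrix}$ and $D_{n+1}=\begin{bmatrix}D_n & D_n+O_n\\ D_n+O_n & D_n\end{bmatrix}$. (2) $D_n\mathbb{1}_{n,n}=n2^{n-1}\mathbb{1}_{n,n}$ and $D_n\mathbb{1}_{n,i}=-2^{n-1}\mathbb{1}_{n,i}$ for all $i=0,1,\ldots,n-1$. (3) With $V_n=\operatorname{Span}\{\mathbb{1}_{n,i}:i=0,1,\ldots,n\}$, the column space of $D_n$ equals $V_n$. (4) $N(A_n)=N(D_n)=V_n^\perp$, where $N(\cdot)$ denotes the null space. *)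

(* Defs.v *)
From mathcomp Require Import all_boot all_order all_algebra.
Unset Printing Implicit Defensive.
Import Order.TTheory GRing.Theory Num.Theory.
Local Open Scope ring_scope.

(* k-th binary digit (k = 0 is the most significant) of the n-digit
   binary representation b_{n,i} of i. *)
Definition bdigit (n i : nat) (k : 'I_n) : bool := odd (i %/ 2 ^ (n.-1 - k))%N.

(* l1 (= Hamming) distance between b_{n,i} and b_{n,j}. *)
Definition hdist (n i j : nat) : nat :=
  (\sum_(k < n) nat_of_bool (bdigit n i k != bdigit n j k))%N.

Definition Dmx (R : pzRingType) (n : nat) : 'M[R]_(2 ^ n) :=
  \matrix_(i < 2 ^ n, j < 2 ^ n) (hdist n i j)%:R.

Definition Omx (R : pzRingType) (n : nat) : 'M[R]_(2 ^ n) := const_mx 1.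

(* the vector 1_{i,j} in R^{2^i}: blocks of 2^j ones, -ones, ... *)
Definition onev (R : pzRingType) (i j : nat) : 'cV[R]_(2 ^ i) :=
  \col_(k < 2 ^ i) (-1) ^+ (k %/ 2 ^ j).

Definition Amx (R : pzRingType) (n : nat) : 'M[R]_(n.+1, 2 ^ n) :=
  \matrix_(r < n.+1, k < 2 ^ n) onev R n (n - r) k ord0.

(* V_n = Span{1_{n,i} : i = 0..n}, as a row-space (of transposed vectors) *)
Definition Vspan (R : fieldType) (n : nat) : 'M[R]_(2 ^ n) :=
  (\sum_(i < n.+1) <<(onev R n i)^T>>)%MS.

Definition in_Vperp (R : fieldType) (n : nat) (x : 'cV[R]_(2 ^ n)) : Prop :=
  forall v : 'cV[R]_(2 ^ n), ((v^T) <= Vspan R n)%MS -> (v^T *m x) = 0.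

Lemma exp2S_add (n : nat) : (2 ^ n + 2 ^ n = 2 ^ n.+1)%N.
Proof. by rewrite expnS mul2n addnn. Qed.

(* Main.v *)
Require Import Defs.
From mathcomp Require Import all_boot all_order all_algebra.
From mathcomp Require Import zify ring lra.
Import Order.TTheory GRing.Theory Num.Theory.
Local Open Scope ring_scope.

Definition ee (R : pzRingType) (c k : nat) : R := (-1) ^+ (k %/ 2 ^ c).

Lemma hdistE n i j : hdist n i j =
  (\sum_(b < n) nat_of_bool (odd (i %/ 2 ^ b) != odd (j %/ 2 ^ b)))%N.
Proof.
rewrite /hdist (reindex_inj rev_ord_inj) /=; apply: eq_bigr => k _.
rewrite /bdigit /=.
have -> : (n.-1 - (n - k.+1) = k)%N by have := ltn_ord k; lia.
by [].
Qed.

Lemma ee_shift (R : comPzRingType) n c k : (c <= n)%N ->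
  ee R c (2 ^ n + k) = (-1) ^+ (c == n) * ee R c k.
Proof.
move=> hc; rewrite /ee divnDl ?dvdn_exp2l // -expnB // exprD.
by rewrite -signr_odd oddX orbF subn_eq0 eqn_leq hc.
Qed.

Lemma ee_small (R : comPzRingType) n k : (k < 2 ^ n)%N -> ee R n k = 1.
Proof. by move=> hk; rewrite /ee divn_small. Qed.

Lemma sum_split (R : comPzRingType) n (F : nat -> R) :
  \sum_(k < 2 ^ n.+1) F k = \sum_(k < 2 ^ n) F k + \sum_(k < 2 ^ n) F (2 ^ n + k)%N.
Proof.
rewrite -exp2S_add big_split_ord /=. done.
Qed.

Lemma sum_ee (R : comPzRingType) n a : (a < n)%N -> \sum_(k < 2 ^ n) ee R a k = 0.
Proof.
elim: n => [//|n IH] ha; rewrite sum_split.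
under [X in _ + X]eq_bigr => k _ do rewrite ee_shift //.
rewrite -mulr_sumr.
case: (ltngtP a n) => h.
- by rewrite IH // mulr0 addr0.
- lia.
- by rewrite expr1 mulN1r subrr.
Qed.

Lemma orth_ne (R : comPzRingType) n a b : (a < b)%N -> (b <= n)%N ->
  \sum_(k < 2 ^ n) ee R a k * ee R b k = 0.
Proof.
elim: n => [|n IH] hab hb; first lia.
case: (ltngtP b n.+1) => h; last first.
- subst b; rewrite -[RHS](@sum_ee R n.+1 a hab); apply: eq_bigr => k _.
  by rewrite (@ee_small R _ _ (ltn_ord k)) mulr1.
- lia.
- rewrite (sum_split R n (fun k => ee R a k * ee R b k)) /=.
  have han : (a <= n)%N by lia.
  have hbn : (b <= n)%N by lia.
  have E k : ee R a (2^n+k) * ee R b (2^n+k) =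
     ((-1)^+(a==n) * (-1)^+(b==n)) * (ee R a k * ee R b k).
    by rewrite (@ee_shift R n a) // (@ee_shift R n b) // mulrACA.
  under [X in _ + X]eq_bigr => k _ do rewrite E.
  by rewrite -mulr_sumr IH ?mulr0 ?addr0 //; lia.
Qed.

Lemma orth_eq (R : comPzRingType) n a :
  \sum_(k < 2 ^ n) ee R a k * ee R a k = (2 ^ n)%:R.
Proof.
under eq_bigr => k _ do rewrite /ee -signr_odd -signr_addb addbb expr0.
by rewrite sumr_const card_ord.
Qed.

Lemma onevE (R : pzRingType) n c k : onev R n c k ord0 = ee R c k.
Proof. by rewrite mxE. Qed.

Lemma orthM (R : realFieldType) n a b : (a <= n)%N -> (b <= n)%N ->
  (onev R n a)^T *m onev R n b = (if a == b then (2^n)%:R else 0)%:M.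
Proof.
move=> ha hb; apply/matrixP => i j; rewrite !ord1 !mxE eqxx mulr1n.
under eq_bigr => k _ do rewrite !mxE.
case: (ltngtP a b) => h.
- exact: orth_ne.
- by under eq_bigr => k _ do rewrite mulrC; exact: orth_ne.
- by rewrite h orth_eq.
Qed.

Lemma Dsym (R : pzRingType) n : (Dmx R n)^T = Dmx R n.
Proof.
apply/matrixP => i j; rewrite !mxE /hdist; congr (_%:R).
by apply: eq_bigr => k _; rewrite eq_sym.
Qed.

Lemma Ddecomp (R : realFieldType) n : 2%:R *: Dmx R n =
  n%:R *: (onev R n n *m (onev R n n)^T) - \sum_(b < n) onev R n b *m (onev R n b)^T.
Proof.
apply/matrixP => i j; rewrite !mxE summxE big_ord1 !mxE.
under [X in _ = _ - X]eq_bigr => b _ do rewrite !mxE big_ord1 !mxE.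
rewrite (divn_small (ltn_ord i)) (divn_small (ltn_ord j)) expr0 !mulr1 hdistE natr_sum mulr_sumr.
have -> : (n%:R : R) = \sum_(b < n) 1 by rewrite sumr_const card_ord.
rewrite -sumrB; apply: eq_bigr => b _.
rewrite -(signr_odd _ (i %/ 2^b)) -(signr_odd _ (j %/ 2^b)).
case: (odd _); case: (odd _) => /=; rewrite ?expr0 ?expr1; lra.
Qed.

Lemma eig (R : realFieldType) n c : (c <= n)%N ->
  2%:R *: (Dmx R n *m onev R n c) =
  (if c == n then (n * 2^n)%:R else - (2^n)%:R) *: onev R n c.
Proof.
move=> hc; rewrite scalemxAl Ddecomp mulmxBl -scalemxAl -mulmxA orthM //.
rewrite mul_mx_scalar mulmx_suml.
have E (b : 'I_n) : onev R n b *m (onev R n b)^T *m onev R n c =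
   (if (b == c :> nat) then (2^n)%:R else 0) *: onev R n b.
  by rewrite -mulmxA orthM ?mul_mx_scalar // ltnW.
under eq_bigr => b _ do rewrite E.
case: (ltngtP c n) => h.
- rewrite (bigD1 (Ordinal h)) //= eqxx big1 => [|b hb].
  + by rewrite scale0r scaler0 sub0r addr0 scaleNr.
  + have -> : (b == c :> nat) = false.
      by apply/negbTE; apply: contra hb => /eqP e; apply/eqP; apply: val_inj.
    by rewrite scale0r.
- lia.
- rewrite big1 => [|b _]; last by rewrite h ltn_eqF // scale0r.
  by rewrite subr0 scalerA -natrM h.
Qed.

Lemma two_nz (R : realFieldType) : (2%:R : R) != 0.
Proof. by rewrite pnatr_eq0. Qed.

Definition lam (R : realFieldType) n c : R :=
  if c == n then (n * 2^n)%:R else - (2^n)%:R.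

Lemma lam_nz (R : realFieldType) n c : (1 <= n)%N -> lam R n c != 0.
Proof.
move=> hn; rewrite /lam; case: ifP => _; rewrite ?oppr_eq0 pnatr_eq0 ?muln_eq0 expn_eq0 //.
by rewrite orbF; case: n hn.
Qed.

Lemma eigT (R : realFieldType) n c : (c <= n)%N ->
  2%:R *: ((onev R n c)^T *m Dmx R n) = lam R n c *: (onev R n c)^T.
Proof.
move=> hc; have := congr1 trmx (@eig R n c hc).
by rewrite !linearZ /= trmx_mul Dsym.
Qed.

Lemma hV (R : realFieldType) n c : (c <= n)%N -> ((onev R n c)^T <= Vspan R n)%MS.
Proof.
move=> hc; rewrite /Vspan.
have hc' : (c < n.+1)%N by [].
by apply: (sumsmx_sup (Ordinal hc')) => //; rewrite genmxE.
Qed.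

Lemma hVM (R : realFieldType) n c : (c <= n)%N ->
  (onev R n c *m (onev R n c)^T <= Vspan R n)%MS.
Proof. by move=> hc; apply: submx_trans (submxMl _ _) (hV R n c hc). Qed.

Lemma sub1 (R : realFieldType) n : (Dmx R n <= Vspan R n)%MS.
Proof.
rewrite -(eqmx_scale _ (two_nz R)) Ddecomp; apply: addmx_sub.
  + by apply: scalemx_sub; apply: hVM.
  + rewrite -scaleN1r; apply: scalemx_sub; apply: summx_sub => b _.
    exact: (hVM R n b (ltnW (ltn_ord b))).
Qed.

Lemma sub2 (R : realFieldType) n : (1 <= n)%N -> (Vspan R n <= Dmx R n)%MS.
Proof.
move=> hn; apply/sumsmx_subP => i _; rewrite genmxE.
  have hi : (i <= n)%N by rewrite -ltnS.
  have -> : (onev R n i)^T = ((lam R n i)^-1 * 2%:R) *: ((onev R n i)^T *m Dmx R n).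
    rewrite -scalerA eigT // scalerA mulVf; first by rewrite scale1r.
    exact: lam_nz.
  by apply: scalemx_sub; apply: submxMl.
Qed.

Lemma span_eq (R : realFieldType) n : (1 <= n)%N -> (Dmx R n == Vspan R n)%MS.
Proof. by move=> hn; apply/andP; split; [exact: sub1 | exact: sub2]. Qed.

Lemma hdist_blk n (x y : bool) a b : (a < 2^n)%N -> (b < 2^n)%N ->
  hdist n.+1 (x * 2^n + a) (y * 2^n + b) = (hdist n a b + (x != y))%N.
Proof.
move=> ha hb; rewrite !hdistE big_ord_recr.
have E (z : bool) c (k : 'I_n) : odd ((z * 2^n + c) %/ 2^k) = odd (c %/ 2^k).
  have -> : (z * 2^n = z * 2^(n-k) * 2^k)%N by rewrite -mulnA -expnD subnK // ltnW.
  rewrite divnMDl ?expn_gt0 // oddD oddM oddX subn_eq0 leqNgt ltn_ord.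
  by rewrite andbF.
have F (z : bool) c : (c < 2^n)%N -> odd ((z * 2^n + c) %/ 2^n) = z.
  by move=> hc; rewrite divnMDl ?expn_gt0 // divn_small // addn0 oddb.
rewrite (F x a ha) (F y b hb).
under eq_bigr => i _ do rewrite (E x a i) (E y b i).
by [].
Qed.

Lemma D1 (R : realFieldType) :
  Dmx R 1 = \matrix_(i < 2 ^ 1, j < 2 ^ 1) (if i == j then 0 else 1).
Proof.
apply/matrixP => i j; rewrite !mxE /hdist big_ord1 /bdigit /=.
by case: i => [[|[|//]] ?]; case: j => [[|[|//]] ?].
Qed.

Lemma Dblk (R : realFieldType) n :
  Dmx R n.+1 = castmx (exp2S_add n, exp2S_add n)
        (block_mx (Dmx R n) (Dmx R n + Omx R n)
                  (Dmx R n + Omx R n) (Dmx R n)).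
Proof.
have key : forall i j : 'I_(2^n + 2^n), ((hdist n.+1 i j)%:R : R) =
   block_mx (Dmx R n) (Dmx R n + Omx R n) (Dmx R n + Omx R n) (Dmx R n) i j.
  move=> i j; rewrite -(splitK i) -(splitK j).
  case: (split i) => a; case: (split j) => b.
  - rewrite /= block_mxEul !mxE.
    have := @hdist_blk n false false a b (ltn_ord a) (ltn_ord b).
    by rewrite /= => ->; rewrite addn0.
  - rewrite /= block_mxEur !mxE.
    have := @hdist_blk n false true a b (ltn_ord a) (ltn_ord b).
    by rewrite /= ?mul1n => ->; rewrite natrD.
  - rewrite /= block_mxEdl !mxE.
    have := @hdist_blk n true false a b (ltn_ord a) (ltn_ord b).
    by rewrite /= ?mul1n => ->; rewrite natrD.
  - rewrite /= block_mxEdr !mxE.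
    have := @hdist_blk n true true a b (ltn_ord a) (ltn_ord b).
    by rewrite /= ?mul1n => ->; rewrite addn0.
apply/matrixP => i j; rewrite castmxE mxE. exact (key (cast_ord (esym (exp2S_add n)) i) (cast_ord (esym (exp2S_add n)) j)).
Qed.

Lemma Aentry (R : realFieldType) n (x : 'cV[R]_(2 ^ n)) r j :
  (Amx R n *m x) r j = ((onev R n (n - r))^T *m x) 0 j.
Proof. by rewrite !mxE; apply: eq_bigr => k _; rewrite !mxE. Qed.

Definition Pperp (R : realFieldType) n (x : 'cV[R]_(2 ^ n)) :=
  forall c, (c <= n)%N -> (onev R n c)^T *m x = 0.

Lemma AP (R : realFieldType) n (x : 'cV[R]_(2 ^ n)) :
  Amx R n *m x = 0 <-> Pperp R n x.
Proof.
split.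
- move=> H c hc; apply/matrixP => i j; rewrite !ord1.
  have hr : (n - c < n.+1)%N by rewrite ltnS leq_subr.
  move/matrixP: H => /(_ (Ordinal hr) 0).
  by rewrite Aentry /= subKn // !mxE => ->.
- move=> H; apply/matrixP => r j; rewrite Aentry H ?mxE //. exact: leq_subr.
Qed.

Lemma DP (R : realFieldType) n (x : 'cV[R]_(2 ^ n)) : (1 <= n)%N ->
  Dmx R n *m x = 0 <-> Pperp R n x.
Proof.
move=> hn; split.
- move=> H c hc; apply: (scalerI (lam_nz R n c hn)).
  by rewrite scaler0 scalemxAl -eigT // -scalemxAl -mulmxA H mulmx0 scaler0.
- move=> H; apply: (scalerI (two_nz R)).
  rewrite scaler0 scalemxAl Ddecomp mulmxBl mulmx_suml -scalemxAl -mulmxA H //.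
  rewrite mulmx0 scaler0 big1 ?subr0 // => b _.
  by rewrite -mulmxA H ?mulmx0 // ltnW.
Qed.

Lemma VP (R : realFieldType) n (x : 'cV[R]_(2 ^ n)) : (1 <= n)%N ->
  in_Vperp R n x <-> Pperp R n x.
Proof.
move=> hn; split.
- by move=> H c hc; apply: H; apply: hV.
- move=> H v hv.
  have hvD : ((v^T) <= Dmx R n)%MS by exact: (submx_trans hv (sub2 R n hn)).
  case/submxP: hvD => w ->.
  by rewrite -mulmxA (proj2 (DP R n x hn) H) mulmx0.
Qed.

Theorem lemma4p1 (R : realFieldType) (n : nat) (hn : (1 <= n)%N) :
  (* (1) *)
  (Dmx R 1 = \matrix_(i < 2 ^ 1, j < 2 ^ 1) (if i == j then 0 else 1)
   /\ Dmx R n.+1 =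
      castmx (exp2S_add n, exp2S_add n)
        (block_mx (Dmx R n) (Dmx R n + Omx R n)
                  (Dmx R n + Omx R n) (Dmx R n)))
  (* (2) *)
  /\ (Dmx R n *m onev R n n = (n * 2 ^ n.-1)%:R *: onev R n n
      /\ forall i : nat, (i < n)%N ->
           Dmx R n *m onev R n i = - (2 ^ n.-1)%:R *: onev R n i)
  (* (3) column space of D_n (= row space of D_n^T) is V_n *)
  /\ ((Dmx R n)^T == Vspan R n)%MS
  (* (4) N(A_n) = N(D_n) = V_n^perp *)
  /\ (forall x : 'cV[R]_(2 ^ n),
        (Amx R n *m x = 0 <-> Dmx R n *m x = 0)
        /\ (Dmx R n *m x = 0 <-> in_Vperp R n x)).
Proof.
have e2 : (2 ^ n = 2 * 2 ^ n.-1)%N by case: n hn => // n' _; rewrite expnS.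
split; first by split; [exact: D1 | exact: Dblk].
split.
  split.
  - apply: (scalerI (two_nz R)); rewrite (@eig R n n (leqnn n)) eqxx scalerA -natrM.
    by congr (_%:R *: _); rewrite e2 mulnCA.
  - move=> i hi; apply: (scalerI (two_nz R)); rewrite (@eig R n i (ltnW hi)) ltn_eqF //.
    by rewrite scalerA mulrN -natrM; congr (- _%:R *: _).
split; first by rewrite Dsym span_eq.
move=> x; split.
- by rewrite AP DP.
- by rewrite DP // VP.
Qed.
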